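(* With the setting in the context, for all $s,s'\in\mathrm{hom}(C,G)_{-1}$ and $v,v'\in\mathrm{hom}(C,G)^1$: (i) $\mathcal A_s\mathcal B_v=\mathcal B_v\mathcal A_s$; (ii) $\mathcal A_s\mathcal A_{s'}=\delta(s,s')\mathcal A_s$ and $\mathcal B_v\mathcal B_{v'}=\delta(v,v')\mathcal B_v$, where $\delta(\cdot,\cdot)$ is the Kronecker delta; (iii) $\sum_{s\in\mathrm{hom}(C,G)_{-1}}\mathcal A_s=\mathbb 1$ and $\sum_{v\in\mathrm{hom}(C,G)^1}\mathcal B_v=\mathbb 1$.
   Context: $(C_\bullet,\partial^C_\bullet)$ is a chain complex with each $C_n$ free abelian on a finite set $K_n$, $K_n\ne\emptyset$ for finitely many $n$; $(G_\bullet,\partial^G_\bullet)$ is a chain complex of finite abelian groups. $\mathrm{hom}(C,G)^p=\prod_n\mathrm{Hom}(C_n,G_{n-p})$ with $(\delta^pf)_n=f_{n-1}\partial^C_n-(-1)^p\partial^G_{n-p}f_n$. $\mathrm{hom}(C,G)_p=\mathrm{Hom}(\mathrm{hom}(C,G)^p,U(1))$ (written additively), $\chi_m(f)=m(f)$, $\delta_1m=m\circ\delta^0$. $\mathcal H=\bigotimes_n\bigotimes_{x\in K_n}\mathbb C[G_n]$ with orthonormal basis $|f\rangle$, $f\in\mathrm{hom}(C,G)^0$; $P_t|f\rangle=|f+t\rangle$, $Q_m|f\rangle=\chi_m(f)|f\rangle$; $A_t=P_{\delta^{-1}t}$ ($t\in\mathrm{hom}(C,G)^{-1}$), $B_m=Q_{\delta_1m}$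 ($m\in\mathrm{hom}(C,G)_1$). $\mathcal A_s=\frac1{|\mathrm{hom}(C,G)^{-1}|}\sum_{t\in\mathrm{hom}(C,G)^{-1}}\chi_s(t)A_t$ and $\mathcal B_v=\frac1{|\mathrm{hom}(C,G)_1|}\sum_{m\in\mathrm{hom}(C,G)_1}\chi_m(v)B_m$. *)

(* Defs.v *)
From HB Require Import structures.
From mathcomp Require Import all_boot all_order all_algebra all_field.
From mathcomp Require Import finmap.
From mathcomp Require Import boolp classical_sets cardinality fsbigop.

Set Implicit Arguments.
Unset Strict Implicit.
Unset Printing Implicit Defensive.

Import Order.TTheory GRing.Theory Num.Theory.
Local Open Scope ring_scope.

(* Encoding of the setting:
   - the bases K_n (n : int) of the free chain complex C are packaged as one
     finite graded set X with degree map [deg : X -> int], K_n = {x | deg x = n};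
   - the boundary of C is given by integer coefficients:
       d^C x = sum_y a x y * y ;
   - G : int -> finZmodType, with boundary maps dG n : G n -> G (n-1);
   - since C_n is free on K_n, Hom(C_n, G_m) = functions K_n -> G_m, hence
       hom(C,G)^p = prod_n Hom(C_n, G_{n-p}) = { f : forall x : X, G (deg x - p) }. *)

Section Setting.
Variables (X : finType) (deg : X -> int) (a : X -> X -> int)
          (G : int -> finZmodType) (dG : forall n : int, G n -> G (n - 1)).

(* total transport between the groups G m and G m' (zero if m <> m') *)
Definition castG (m m' : int) (g : G m) : G m' :=
  match m =P m' with
  | ReflectT e => eq_rect m (fun k => G k) g m' e
  | ReflectF _ => 0
  end.

Definition cochain (p : int) := {dffun forall x : X, G (deg x - p)}.

Definition cadd (p : int) (f g : cochain p) : cochain p :=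
  finfun (fun x : X => (f x + g x : G (deg x - p))).
Definition czero (p : int) : cochain p :=
  finfun (fun x : X => (0 : G (deg x - p))).

(* (delta^p f)_n = f_{n-1} o d^C_n - (-1)^p d^G_{n-p} o f_n *)
Definition delta (p : int) (f : cochain p) : cochain (p + 1) :=
  finfun (fun x : X =>
    ((\sum_(y : X) castG (deg x - (p + 1)) (f y *~ a x y))
     - castG (deg x - (p + 1)) (dG (f x)) *~ ((-1) ^ p) : G (deg x - (p + 1)))).

(* hom(C,G)_p = Hom(hom(C,G)^p, U(1)), U(1) = unit circle in algC;
   m in hom(C,G)_p is represented by its character chi_m : hom^p -> U(1). *)
Definition dual (p : int) : set {ffun cochain p -> algC} :=
  [set chi | (forall f, `|chi f| = 1) /\
             (forall f g, chi (cadd f g) = chi f * chi g)]%classic.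

Definition card_dual (p : int) : nat := #|` fset_set (@dual p)|%fset.

(* operators on H = C[hom^0] (orthonormal basis |f>), via matrix entries
   A (g, f) = <g| A |f> *)
Definition op := {ffun (cochain 0 * cochain 0) -> algC}.

Definition omul (A B : op) : op :=
  [ffun gf : cochain 0 * cochain 0 => \sum_(k : cochain 0) A (gf.1, k) * B (k, gf.2)].
Definition oid : op := [ffun gf : cochain 0 * cochain 0 => (gf.1 == gf.2)%:R].
Definition oscale (c : algC) (A : op) : op := [ffun gf => c * A gf].

Definition Pop (t : cochain 0) : op :=
  [ffun gf : cochain 0 * cochain 0 => (gf.1 == cadd gf.2 t)%:R].
Definition Qop (m : {ffun cochain 0 -> algC}) : op :=
  [ffun gf : cochain 0 * cochain 0 => (gf.1 == gf.2)%:R * m gf.2].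

Definition Aop (t : cochain (-1)) : op := Pop (delta t).
Definition Bop (m : {ffun cochain 1 -> algC}) : op :=
  Qop [ffun f : cochain 0 => m (delta f)].

Definition calA (s : {ffun cochain (-1) -> algC}) : op :=
  oscale (#|{: cochain (-1)}|%:R)^-1 (\sum_(t : cochain (-1)) oscale (s t) (Aop t)).
Definition calB (v : cochain 1) : op :=
  oscale ((card_dual 1)%:R)^-1
    (\sum_(m \in @dual 1) oscale (m v) (Bop m)).

End Setting.

(* Main.v *)
Require Import Defs.
From HB Require Import structures.
From mathcomp Require Import all_boot all_order all_algebra all_field.
From mathcomp Require Import finmap.
From mathcomp Require Import boolp classical_sets cardinality fsbigop.
From mathcomp Require Import all_fingroup all_solvable all_character.
Set Implicit Arguments.
Unset Strict Implicit.
Unset Printing Implicit Defensive.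
Import GRing.Theory Num.Theory.
Local Open Scope ring_scope.

Section Chars.
Variable U : finZmodType.

Definition isChar (chi : U -> algC) :=
  (forall f, `|chi f| = 1) /\ (forall f g, chi (f + g) = chi f * chi g).

Definition Dset : set {ffun U -> algC} := [set chi | isChar chi]%classic.

Lemma char_neq0 chi : isChar chi -> forall x, chi x != 0.
Proof. by move=> [n _] x; rewrite -normr_eq0 n oner_eq0. Qed.

Lemma char0 chi : isChar chi -> chi 0 = 1.
Proof.
move=> H; have /(_ 0) nz := char_neq0 H.
have := H.2 0 0; rewrite addr0 => e.
by apply: (mulfI nz); rewrite mulr1 -e.
Qed.

Lemma charN chi : isChar chi -> forall x, chi (- x) = (chi x)^-1.
Proof.
move=> H x; have := H.2 x (- x); rewrite subrr char0 // => e.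
by apply: (mulfI (char_neq0 H x)); rewrite -e mulfV ?char_neq0.
Qed.

Lemma charMn chi : isChar chi -> forall x n, chi (x *+ n) = chi x ^+ n.
Proof.
move=> H x; elim=> [|n IH]; first by rewrite mulr0n expr0 char0.
by rewrite mulrS exprS H.2 IH.
Qed.

Lemma char_root chi : isChar chi -> forall x, chi x ^+ #|U| = 1.
Proof.
move=> H x; rewrite -charMn // -FinRing.zmodXgE -cardsT expg_cardG ?inE //.
exact: char0.
Qed.


Lemma Dset_finite : finite_set Dset.
Proof.
pose P : {poly algC} := 'X^#|U| - 1%:P.
have [r Pr] := closed_field_poly_normal P.
have mP : P \is monic by apply: monicXnsubC; by apply/card_gt0P; exists 0.
have rootr z : z ^+ #|U| = 1 -> z \in r.
  move=> e; rewrite -root_prod_XsubC.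
  have : root P z by rewrite /root !hornerE e subrr.
  by rewrite {1}Pr (monicP mP) scale1r.
apply: (@sub_finite_set _ _
   ((fun h : {ffun U -> 'I_(size r).+1} => [ffun x => nth 0 r (h x)]) @` setT)%classic).
  move=> chi Hchi; exists [ffun x => inord (index (chi x) r)] => //.
  apply/ffunP => x; rewrite !ffunE inordK ?nth_index ?rootr ?char_root //.
  by rewrite ltnS index_size.
by apply: finite_image; apply: finite_finset.
Qed.


Definition one_ch : {ffun U -> algC} := [ffun=> 1].

Lemma one_isChar : isChar one_ch.
Proof. by split=> *; rewrite !ffunE ?normr1 ?mulr1. Qed.

Lemma sum_char (chi : {ffun U -> algC}) : isChar chi ->
  \sum_x chi x = if chi == one_ch then #|U|%:R else 0.
Proof.
move=> H; case: eqP => [->|/eqP ne].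
  by rewrite (eq_bigr (fun=> 1)) ?sumr_const // => x _; rewrite ffunE.
have /existsP[y Hy] : [exists y, chi y != 1].
  apply: contraNT ne => /existsPn h; apply/eqP/ffunP => y; rewrite ffunE.
  by apply/eqP; have := h y; rewrite negbK.
set S := \sum_x chi x.
have e : S = chi y * S.
  rewrite /S mulr_sumr (reindex_inj (addIr y)) /=.
  by apply: eq_bigr => x _; rewrite H.2 mulrC.
have : (1 - chi y) * S = 0 by rewrite mulrBl mul1r -e subrr.
by move/eqP; rewrite mulf_eq0 subr_eq0 eq_sym (negbTE Hy) /= => /eqP.
Qed.

Lemma memD m : m \in fset_set Dset <-> isChar m.
Proof.
rewrite (in_fset_set Dset_finite m); split => [/set_mem //|H].
by apply: mem_set.
Qed.

Lemma sep_char (w : U) : w != 0 ->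
  exists chi : U -> algC, [/\ forall x, `|chi x| = 1,
     forall x y, chi (x + y) = chi x * chi y & chi w != 1].
Proof.
move=> nzw.
have : w \notin (1%g : {set U}).
  by rewrite inE; apply: contra nzw => /eqP ->.
rewrite -(TI_cfker_irr [set: U]%G) => /bigcapP.
case/boolP: [forall i : Iirr [set: U]%G, w \in cfker 'chi_i].
  by move=> /forallP H []; move=> i _; apply: H.
rewrite negb_forall => /existsP[i Hi] _.
have lin : 'chi[[set: U]%G]_i \is a linear_char.
  by move/char_abelianP: (FinRing.zmod_abelian [set: U]); apply.
exists ('chi_i : U -> algC); split.
- by move=> x; rewrite normC_lin_char ?inE.
- by move=> x y; rewrite -(lin_charM lin) ?inE.
- by move: Hi; rewrite cfkerEirr inE (lin_char1 lin).
Qed.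

Lemma sum_dual (w : U) : \sum_(m <- fset_set Dset) m w =
   if w == 0 then (#|` fset_set Dset|)%:R else 0.
Proof.
case: eqP => [->|/eqP nw].
  rewrite card_fset_sum1 natr_sum; apply: eq_big_seq => m /memD H.
  by rewrite char0.
have [c0 [n0 m0 w0]] := sep_char nw.
pose chi0 : {ffun U -> algC} := [ffun x => c0 x].
have C0 : isChar chi0 by split=> *; rewrite !ffunE ?n0 ?m0.
pose mulc (m : {ffun U -> algC}) := [ffun x => chi0 x * m x].
have isC (m : {ffun U -> algC}) : isChar m -> isChar (mulc m).
  move=> Hm; split=> *; rewrite !ffunE ?normrM ?C0.1 ?Hm.1 ?mulr1 //.
  by rewrite m0 Hm.2 mulrACA.
have inj : injective mulc.
  move=> m1 m2 /ffunP e; apply/ffunP => x; have := e x; rewrite !ffunE.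
  by apply: mulfI; apply: char_neq0.
have pe : perm_eq (fset_set Dset) (map mulc (fset_set Dset)).
  apply: uniq_perm; rewrite ?map_inj_uniq ?fset_uniq //.
  move=> m; apply/idP/idP => [/memD Hm|/mapP[m' /memD Hm' ->]]; last first.
    by apply/memD; apply: isC.
  apply/mapP; exists [ffun x => (chi0 x)^-1 * m x].
    apply/memD; split=> *; rewrite !ffunE ?normrM ?normfV ?n0 ?Hm.1 ?invr1 ?mulr1 //.
    by rewrite m0 Hm.2 invfM mulrACA.
  by apply/ffunP => x; rewrite !ffunE mulrA mulfV ?mul1r // char_neq0.
set S := \sum_(m <- fset_set Dset) m w.
have e : S = chi0 w * S.
  rewrite {1}/S (perm_big _ pe) big_map mulr_sumr.
  by apply: eq_bigr => m _; rewrite ffunE.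
have : (1 - chi0 w) * S = 0 by rewrite mulrBl mul1r -e subrr.
by move/eqP; rewrite mulf_eq0 subr_eq0 eq_sym ffunE (negbTE w0) /= => /eqP.
Qed.

Lemma card_D : (#|` fset_set Dset|)%:R = #|U|%:R :> algC.
Proof.
have : \sum_(w : U) \sum_(m <- fset_set Dset) m w =
   \sum_(m <- fset_set Dset) \sum_(w : U) m w by apply: exchange_big.
rewrite (eq_bigr (fun w => if w == 0 then (#|` fset_set Dset|)%:R else 0));
  last by move=> w _; rewrite sum_dual.
rewrite (bigD1 0) //= eqxx big1 ?addr0; last by move=> w /negbTE ->.
move=> ->; rewrite (eq_big_seq (fun m => if m == one_ch then #|U|%:R else 0));
  last by move=> m /memD H; rewrite sum_char.
rewrite (bigD1_seq one_ch) ?fset_uniq //=; last by apply/memD; apply: one_isChar.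
by rewrite eqxx big1 ?addr0 // => m /negbTE ->.
Qed.

End Chars.

Section CochainZmod.
Variables (X : finType) (deg : X -> int) (G : int -> finZmodType) (p : int).

Definition cneg (f : cochain deg G p) : cochain deg G p :=
  finfun (fun x : X => (- f x : G (deg x - p))).

Lemma caddA : associative (@cadd X deg G p).
Proof. by move=> f g h; apply/ffunP => x; rewrite !ffunE; exact: addrA. Qed.
Lemma caddC : commutative (@cadd X deg G p).
Proof. by move=> f g; apply/ffunP => x; rewrite !ffunE; exact: addrC. Qed.
Lemma cadd0 : left_id (@czero X deg G p) (@cadd X deg G p).
Proof. by move=> f; apply/ffunP => x; rewrite !ffunE; exact: add0r. Qed.
Lemma caddN : left_inverse (@czero X deg G p) cneg (@cadd X deg G p).
Proof. by move=> f; apply/ffunP => x; rewrite !ffunE; exact: addNr. Qed.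

HB.instance Definition _ := Finite.on (cochain deg G p).
HB.instance Definition _ := GRing.isZmodule.Build (cochain deg G p) caddA caddC cadd0 caddN.
End CochainZmod.

From mathcomp Require Import zify.

Unset Implicit Arguments.
Section Delta.
Variables (X : finType) (deg : X -> int) (a : X -> X -> int)
          (G : int -> finZmodType) (dG : forall n : int, G n -> G (n - 1)).
Hypothesis HdG_add : forall (n : int) (g h : G n), dG n (g + h) = dG n g + dG n h.

Local Notation castG m m' g := (@Defs.castG G m m' g).

Lemma castG_id m (g : G m) : castG m m g = g.
Proof. by rewrite /Defs.castG; case: (m =P m) => [e|//]; rewrite (eq_axiomK e). Qed.

Lemma castG_ne m m' (g : G m) : m != m' -> castG m m' g = 0.
Proof. by rewrite /Defs.castG; case: (m =P m'). Qed.

Lemma castG_add m m' (g h : G m) : castG m m' (g + h) = castG m m' g + castG m m' h.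
Proof.
rewrite /Defs.castG; case: (m =P m') => [e|_]; last by rewrite addr0.
by subst m'.
Qed.

Lemma castG0 m m' : castG m m' 0 = 0.
Proof.
by rewrite /Defs.castG; case: (m =P m') => // e; subst m'.
Qed.

Lemma castG_sum m m' (F : X -> G m) :
  castG m m' (\sum_y F y) = \sum_y castG m m' (F y).
Proof. exact: (big_morph _ (castG_add m m') (castG0 m m')). Qed.

Lemma castG_mulz m m' (g : G m) k : castG m m' (g *~ k) = castG m m' g *~ k.
Proof.
rewrite /Defs.castG; case: (m =P m') => [e|_]; last by rewrite mul0rz.
by subst m'.
Qed.

Lemma castG_comp m m' m'' (g : G m) : (m = m') \/ (m' = m'') ->
  castG m' m'' (castG m m' g) = castG m m'' g.
Proof.
case: (m =P m') => [e _|ne [//|e]]; first by subst m'; rewrite castG_id.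
by subst m''; rewrite castG_id.
Qed.

Lemma dG0 n : dG n 0 = 0.
Proof.
have := HdG_add n 0 0; rewrite addr0 => e.
by apply: (addrI (dG n 0)); rewrite -e addr0.
Qed.

Lemma dGN n (g : G n) : dG n (- g) = - dG n g.
Proof.
by apply/eqP; rewrite -subr_eq0 opprK -HdG_add addNr dG0.
Qed.

Lemma dG_muln n (g : G n) k : dG n (g *+ k) = dG n g *+ k.
Proof.
by elim: k => [|k IH]; rewrite ?mulr0n ?dG0 // !mulrS HdG_add IH.
Qed.

Lemma dG_mulz n (g : G n) k : dG n (g *~ k) = dG n g *~ k.
Proof.
case: k => k; first by rewrite -!pmulrn dG_muln.
by rewrite NegzE !mulrNz dGN -!pmulrn dG_muln.
Qed.

Lemma dG_sum n (F : X -> G n) : dG n (\sum_y F y) = \sum_y dG n (F y).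
Proof. exact: (big_morph _ (HdG_add n) (dG0 n)). Qed.

Lemma dG_castG m m' (g : G m) :
  dG m' (castG m m' g) = castG (m - 1) (m' - 1) (dG m g).
Proof.
case: (m =P m') => [e|ne]; first by subst m'; rewrite !castG_id.
rewrite castG_ne ?dG0 ?castG_ne //; last by apply/eqP.
by apply/eqP => e; apply: ne; lia.
Qed.


Lemma zmod_rearr (V : zmodType) (A B C D : V) : A + B - (C + D) = (A - C) + (B - D).
Proof. by rewrite opprD addrACA. Qed.

Lemma delta_add p (f g : cochain deg G p) :
  delta a dG (cadd f g) = cadd (delta a dG f) (delta a dG g).
Proof.
apply/ffunP => x; rewrite !ffunE.
rewrite (eq_bigr (fun y => castG _ (deg x - (p + 1)) (f y *~ a x y)
                         + castG _ (deg x - (p + 1)) (g y *~ a x y))); last first.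
  by move=> y _; rewrite !ffunE mulrzDl castG_add.
rewrite big_split /= HdG_add castG_add mulrzDl.
exact: zmod_rearr.
Qed.


Hypothesis Ha_deg : forall x y : X, a x y != 0 -> deg y = deg x - 1.
Hypothesis HdCdC : forall x z : X, \sum_(y : X) a x y * a y z = 0.
Hypothesis HdGdG : forall (n : int) (g : G n), dG (n - 1) (dG n g) = 0.

Local Notation cast m' g := (@Defs.castG G _ m' g).

Lemma delta_delta (t : cochain deg G (-1)) x :
  (delta a dG (delta a dG t)) x = 0.
Proof.
rewrite ffunE.
set n1 := deg x - _.
have T1 y : cast n1 (delta a dG t y *~ a x y) =
   \sum_z cast n1 (t z *~ (a x y * a y z)) + cast n1 (dG _ (t y)) *~ a x y.
  have [->|nz] := eqVneq (a x y) 0.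
    rewrite !mulr0z castG0 addr0 big1 // => z _.
    by rewrite mul0r mulr0z castG0.
  have ey : deg y - (-1 + 1) = n1 by rewrite /n1 (Ha_deg x y nz); lia.
  rewrite ffunE /= mulrN1z opprK mulrzDl castG_add castG_mulz castG_sum mulrz_suml.
  rewrite castG_mulz castG_comp; last by right.
  congr (_ + _); apply: eq_bigr => z _.
  rewrite castG_comp; last by right.
  by rewrite [a x y * _]mulrC mulrzA !castG_mulz.
have T2 : cast n1 (dG _ (delta a dG t x)) = \sum_z cast n1 (dG _ (t z)) *~ a x z.
  rewrite ffunE /= mulrN1z opprK HdG_add dG_sum castG_add castG_sum.
  rewrite [dG _ (cast _ (dG _ _))]dG_castG HdGdG castG0 castG0 addr0.
  apply: eq_bigr => z _; rewrite dG_castG dG_mulz !castG_mulz.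
  have [->|nz] := eqVneq (a x z) 0; first by rewrite !mulr0z.
  rewrite castG_comp //; left; rewrite (Ha_deg x z nz); lia.
have -> : ((-1) ^ (-1 + 1) : int) = 1 by [].
rewrite mulr1z T2 (eq_bigr _ (fun y _ => T1 y)) big_split /= exchange_big /=.
rewrite big1 ?add0r ?subrr // => z _.
by rewrite -castG_sum -mulrz_sumr HdCdC mulr0z castG0.
Qed.

End Delta.


Import GRing.Theory Num.Theory.
Local Open Scope ring_scope.

Section Main.
Variables (X : finType) (deg : X -> int) (a : X -> X -> int)
          (G : int -> finZmodType) (dG : forall n : int, G n -> G (n - 1)).
Hypothesis HdG_add : forall (n : int) (g h : G n), dG n (g + h) = dG n g + dG n h.
Hypothesis Ha_deg : forall x y : X, a x y != 0 -> deg y = deg x - 1.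
Hypothesis HdCdC : forall x z : X, \sum_(y : X) a x y * a y z = 0.
Hypothesis HdGdG : forall (n : int) (g : G n), dG (n - 1) (dG n g) = 0.

Local Notation C p := (cochain deg G p).
Local Notation dl := (delta a dG).

Lemma dual_eq p : @dual X deg G p = @Dset (C p).
Proof. by []. Qed.

Lemma fin_dual p : finite_set (@dual X deg G p).
Proof. rewrite dual_eq; exact: (@Dset_finite (C p)). Qed.

Lemma entryA (s : {ffun C (-1) -> algC}) (g f : C 0) : calA a dG s (g, f) =
  (#|{: C (-1)}|%:R)^-1 * \sum_(t : C (-1)) s t * (g == f + dl t)%:R.
Proof.
rewrite /calA ffunE sum_ffunE; congr (_ * _); apply: eq_bigr => t _.
by rewrite !ffunE.
Qed.

Lemma entryB (v : C 1) (g f : C 0) : calB a dG v (g, f) = (g == f)%:R * (v + dl f == 0)%:R.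
Proof.
rewrite /calB.
rewrite fsbig_finite; last exact: fin_dual.
rewrite ffunE sum_ffunE.
rewrite (eq_big_seq (fun m : {ffun C 1 -> algC} => (g == f)%:R * m (v + dl f))); last first.
  move=> m; rewrite dual_eq => /memD [_ Hm]; rewrite !ffunE Hm /=.
  by rewrite mulrCA.
rewrite -mulr_sumr dual_eq sum_dual /card_dual dual_eq card_D.
have nz : (#|C 1|%:R : algC) != 0.
  by rewrite pnatr_eq0 -lt0n; apply/card_gt0P; exists 0.
by case: (_ == 0); rewrite /= ?mulr0 // mulr1 mulrCA mulVf ?mulr1.
Qed.


Lemma dl_add p (f g : C p) : dl (f + g) = dl f + dl g.
Proof. exact: (delta_add X deg a G dG HdG_add p f g). Qed.

Lemma dl0 p : dl (0 : C p) = 0.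
Proof.
have := dl_add _ (0 : C p) 0; rewrite addr0 => e.
by apply: (addrI (dl (0 : C p))); rewrite -e addr0.
Qed.

Lemma dl_sub p (f g : C p) : dl (f - g) = dl f - dl g.
Proof.
by rewrite -[in RHS](subrK g f) [in RHS]dl_add addrK.
Qed.

Lemma dl_dl (t : C (-1)) : dl (dl t) = 0.
Proof.
apply/ffunP => x; rewrite (delta_delta X deg a G dG HdG_add Ha_deg HdCdC HdGdG t x).
by rewrite ffunE.
Qed.

Lemma collapse_r (T : finType) (F : T -> algC) (f : T) (c : algC) :
  \sum_k F k * ((k == f)%:R * c) = F f * c.
Proof.
rewrite (bigD1 f) //= eqxx mul1r big1 ?addr0 // => k /negbTE ->.
by rewrite mul0r mulr0.
Qed.

Lemma collapse_l (T : finType) (F : T -> algC) (g : T) (c : T -> algC) :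
  \sum_k ((g == k)%:R * c k) * F k = c g * F g.
Proof.
rewrite (bigD1 g) //= eqxx mul1r big1 ?addr0 // => k /negbTE.
by rewrite eq_sym => ->; rewrite !mul0r.
Qed.

Lemma partI (s : {ffun C (-1) -> algC}) (v : C 1) :
  omul (calA a dG s) (calB a dG v) = omul (calB a dG v) (calA a dG s).
Proof.
apply/ffunP => -[g f]; rewrite [LHS]ffunE [RHS]ffunE /=.
rewrite (eq_bigr (fun k => calA a dG s (g, k) * ((k == f)%:R * (v + dl f == 0)%:R)));
  last by move=> k _; rewrite entryB.
rewrite [RHS](eq_bigr (fun k => ((g == k)%:R * (v + dl g == 0)%:R) * calA a dG s (k, f)));
  last by move=> k _; rewrite entryB; have [->|_] := eqVneq g k; rewrite ?mul0r.
rewrite collapse_r collapse_l entryA.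
rewrite [_ * (_ * _)]mulrC -!mulrA; congr (_ * _); rewrite !mulr_suml.
apply: eq_bigr => t _; rewrite -!mulrA; congr (_ * _).
case: eqP => [->|_]; last by rewrite !mul0r.
by rewrite dl_add dl_dl addr0.
Qed.


Definition Aent (h : C (-1) -> algC) (g f : C 0) :=
  \sum_(t : C (-1)) h t * (g == f + dl t)%:R.

Lemma prodA (h h' : C (-1) -> algC) (g f : C 0) :
  \sum_(k : C 0) Aent h g k * Aent h' k f =
  \sum_(u : C (-1)) (\sum_(t : C (-1)) h t * h' (u - t)) * (g == f + dl u)%:R.
Proof.
rewrite /Aent.
rewrite (eq_bigr (fun k => \sum_(t : C (-1)) \sum_(t' : C (-1))
   (h t * (g == k + dl t)%:R) * (h' t' * (k == f + dl t')%:R))); last first.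
  by move=> k _; rewrite mulr_suml; apply: eq_bigr => t _; rewrite mulr_sumr.
rewrite exchange_big /=.
rewrite (eq_bigr (fun t => \sum_(t' : C (-1)) h t * h' t' * (g == f + dl t' + dl t)%:R)); last first.
  move=> t _; rewrite exchange_big /=; apply: eq_bigr => t' _.
  rewrite (bigD1 (f + dl t')) //= eqxx mulr1 big1 ?addr0.
  2: by move=> k /negbTE ->; rewrite !mulr0.
  by rewrite mulrAC.
rewrite (eq_bigr (fun t => \sum_(u : C (-1)) h t * h' (u - t) * (g == f + dl u)%:R)); last first.
  move=> t _; rewrite (reindex_inj (addIr (- t))) /=; apply: eq_bigr => u _.
  by rewrite dl_sub -addrA subrK.
rewrite exchange_big /=; apply: eq_bigr => u _; by rewrite mulr_suml.
Qed.


Lemma partIIA (s s' : {ffun C (-1) -> algC}) :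
  @dual X deg G (-1) s -> @dual X deg G (-1) s' ->
  omul (calA a dG s) (calA a dG s') = if s == s' then calA a dG s else 0.
Proof.
move=> Cs Cs'.
have Cs0 : @isChar (C (-1)) s := Cs.
have Cs0' : @isChar (C (-1)) s' := Cs'.
set N := (#|{: C (-1)}|%:R : algC).
have Nz : N != 0 by rewrite pnatr_eq0 -lt0n; apply/card_gt0P; exists 0.
have inner u : \sum_t s t * s' (u - t) = s' u * (N * (s == s')%:R).
  pose chi : {ffun C (-1) -> algC} := [ffun t => s t * (s' t)^-1].
  have Cchi : isChar chi.
    split=> *; rewrite !ffunE ?normrM ?normfV ?Cs.1 ?Cs'.1 ?invr1 ?mulr1 //.
    by rewrite Cs.2 Cs'.2 invfM mulrACA.
  have -> : \sum_t s t * s' (u - t) = s' u * \sum_t chi t.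
    rewrite mulr_sumr; apply: eq_bigr => t _.
    by rewrite ffunE Cs'.2 (charN Cs0') mulrCA.
  rewrite (sum_char Cchi); congr (_ * _).
  have -> : (chi == one_ch (C (-1))) = (s == s').
    apply/eqP/eqP => [e|e]; apply/ffunP => t.
      have := e; move/ffunP/(_ t); rewrite !ffunE => e2.
      by rewrite -[s t](mulfVK (char_neq0 Cs0' t)) e2 mul1r.
    by rewrite !ffunE e mulfV // char_neq0.
  by case: (s == s'); rewrite ?mulr1 ?mulr0.
have E g f : omul (calA a dG s) (calA a dG s') (g, f) = (s == s')%:R * calA a dG s (g, f).
  rewrite ffunE /=.
  rewrite (eq_bigr (fun k => N^-1 * N^-1 * (Aent s g k * Aent s' k f)));
    last by move=> k _; rewrite !entryA mulrACA.
  rewrite -mulr_sumr prodA entryA.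
  under eq_bigr do rewrite inner.
  case: eqP => [<-|_]; last by rewrite big1 ?mulr0 ?mul0r // => u _; rewrite !mulr0 mul0r.
  rewrite mul1r -mulrA; congr (_ * _); rewrite mulr_sumr; apply: eq_bigr => u _.
  rewrite mulr1 [s u * _]mulrC !mulrA.
  by rewrite mulVf // mul1r mulrC.
apply/ffunP => -[g f]; rewrite E.
by case: (s == s'); rewrite ?mul1r ?mul0r ?ffunE.
Qed.


Lemma partIIB (v v' : C 1) :
  omul (calB a dG v) (calB a dG v') = if v == v' then calB a dG v else 0.
Proof.
apply/ffunP => -[g f]; rewrite [LHS]ffunE /=.
rewrite (eq_bigr (fun k => ((g == k)%:R * (v + dl k == 0)%:R) * calB a dG v' (k, f)));
  last by move=> k _; rewrite entryB.
rewrite collapse_l entryB.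
case: (eqVneq v v') => [<-|ne] /=.
  rewrite entryB; have [->|_] := eqVneq g f; last by rewrite !mul0r mulr0.
  by rewrite ?eqxx !mul1r; case: (_ == 0); rewrite ?mulr1 ?mulr0.
rewrite ffunE; have [->|_] := eqVneq g f; last by rewrite mul0r mulr0.
rewrite ?eqxx mul1r.
case: (eqVneq (v + dl f) 0) => e1; case: (eqVneq (v' + dl f) 0) => e2;
  rewrite ?mul0r ?mulr0 //.
by exfalso; move/eqP: ne; apply; apply: (addIr (dl f)); rewrite e1 e2.
Qed.

Lemma partIIIA :
  \sum_(s \in @dual X deg G (-1)) calA a dG s = oid deg G.
Proof.
rewrite fsbig_finite; last exact: fin_dual.
apply/ffunP => -[g f]; rewrite sum_ffunE [RHS]ffunE /=.
set N := (#|{: C (-1)}|%:R : algC).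
have Nz : N != 0 by rewrite pnatr_eq0 -lt0n; apply/card_gt0P; exists 0.
under eq_bigr do rewrite entryA.
rewrite -mulr_sumr.
rewrite exchange_big /=.
under eq_bigr do rewrite -mulr_suml.
rewrite dual_eq.
under eq_bigr do rewrite (@sum_dual (C (-1))).
rewrite (bigD1 0) //= eqxx big1 ?addr0; last by move=> t /negbTE ->; rewrite mul0r.
by rewrite card_D dl0 addr0 mulrA mulVf ?mul1r.
Qed.

Lemma partIIIB : \sum_(v : C 1) calB a dG v = oid deg G.
Proof.
apply/ffunP => -[g f]; rewrite sum_ffunE [RHS]ffunE /=.
under eq_bigr do rewrite entryB.
rewrite -mulr_sumr (bigD1 (- dl f)) //= addNr eqxx big1 ?addr0 ?mulr1 //.
by move=> v ne; rewrite addr_eq0 (negbTE ne).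
Qed.

End Main.

Theorem lemma1 (X : finType) (deg : X -> int) (a : X -> X -> int)
    (G : int -> finZmodType) (dG : forall n : int, G n -> G (n - 1))
    (* d^C_n maps C_n to C_{n-1} *)
    (Ha_deg : forall x y : X, a x y != 0 -> deg y = deg x - 1)
    (* d^C o d^C = 0 *)
    (HdCdC : forall x z : X, \sum_(y : X) a x y * a y z = 0)
    (* each d^G_n is a group homomorphism *)
    (HdG_add : forall (n : int) (g h : G n), dG n (g + h) = dG n g + dG n h)
    (* d^G o d^G = 0 *)
    (HdGdG : forall (n : int) (g : G n), dG (n - 1) (dG n g) = 0) :
  [/\ (* (i) *)
      (forall (s : {ffun cochain deg G (-1) -> algC}) (v : cochain deg G 1),
         @dual X deg G (-1) s ->
         omul (calA a dG s) (calB a dG v) = omul (calB a dG v) (calA a dG s)),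
      (* (ii) *)
      (forall s s' : {ffun cochain deg G (-1) -> algC},
         @dual X deg G (-1) s -> @dual X deg G (-1) s' ->
         omul (calA a dG s) (calA a dG s') = if s == s' then calA a dG s else 0),
      (forall v v' : cochain deg G 1,
         omul (calB a dG v) (calB a dG v') = if v == v' then calB a dG v else 0),
      (* (iii) *)
      (\sum_(s \in @dual X deg G (-1)) calA a dG s = oid deg G)
    & (\sum_(v : cochain deg G 1) calB a dG v = oid deg G)].
Proof.
split.
- by move=> s v _; apply: partI.
- by move=> s s' Hs Hs'; apply: partIIA.
- by move=> v v'; apply: partIIB.
- by apply: partIIIA.
- by apply: partIIIB.
Qed.
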